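(* Let $W$ be a finite set of possible worlds, let $\Delta$ be a backbone (a sequence $U_1,\dots,U_n$ of subsets of $W$), and let $BA(\Delta)$ be the set of belief algebras on $W$ whose backbone is $\Delta$. Suppose $G_1,G_2\in BA(\Delta)$. Then: (1) $G_1\cap G_2\in BA(\Delta)$; (2) $\operatorname{Gen}(G_1\cup G_2)$ is a belief algebra, and $\operatorname{Gen}(G_1\cup G_2)\in BA(\Delta)$.
   Context: $W$ is a finite nonempty set; $R_W=\{(U,V)\mid U,V\subseteq W,\ U\cap V=\varnothing\}$. A belief algebra on $W$ is a pair $(2^W,\gg)$, $\gg$ a binary relation on $2^W$, such that for all $U,V,U_1,V_1,U_2,V_2\subseteq W$: (A0) $\gg\subseteq R_W$; (A1) $U\gg\varnothing$ iff $U\neq\varnothing$; (A2) $U\gg V$ implies not $V\gg U$; (A3) if $U_1\supseteq U$, $U\gg V$, $V\supseteq V_1$, $U_1\cap V_1=\varnothing$ then $U_1\gg V_1$; (A4) if $U=U_1\cup V_1=U_2\cup V_2$, $U_1\gg V_1$, $U_2\gg V_2$ then $U_1\cap U_2\gg V_1\cup V_2$. Belief algebras are identified with their relations as sets of pairs; $\cap,\cup$ refer to these sets. For $\Omega\subseteq R_W$, $\operatorname{Gen}(\Omega)$ is the smallest subset of $R_W$ that contains $\Omega$, contains $(U,\varnothing)$ for every nonempty $U\subseteq W$, and is closed under: if $(U,V)$ is in it, $U\subseteq U_1$, $V_1\subseteq V$, $U_1\cap V_1=\varnothing$ then $(U_1,V_1)$ is in it; if $U_1\cup V_1=U_2\cup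 V_2$ and $(U_1,V_1),(U_2,V_2)$ are in it then $(U_1\cap U_2,V_1\cup V_2)$ is in it. Every belief algebra $(2^W,\gg)$ has a unique backbone: a sequence $U_1,\dots,U_n$ of nonempty pairwise disjoint sets with union $W$, with $U_i\gg U_{i+1}$ for $i<n$, such that for each $i$ any two disjoint nonempty subsets $V_1,V_2$ of $U_i$ satisfy $(V_1,V_2)\notin\gg$ and $(V_2,V_1)\notin\gg$. *)

(* Defs.v *)
From mathcomp Require Import all_boot.
Set Implicit Arguments. Unset Strict Implicit. Unset Printing Implicit Defensive.

Definition brel (W : finType) := {set ({set W} * {set W})}.

Definition RW (W : finType) : brel W := [set p : {set W} * {set W} | [disjoint p.1 & p.2]].

Definition belief_algebra (W : finType) (G : brel W) : Prop :=
  G \subset RW W /\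
  (forall U : {set W}, (U, set0) \in G <-> U != set0) /\
  (forall U V : {set W}, (U, V) \in G -> (V, U) \notin G) /\
  (forall U V U1 V1 : {set W},
              U \subset U1 -> (U, V) \in G -> V1 \subset V ->
              [disjoint U1 & V1] -> (U1, V1) \in G) /\
  (forall U U1 V1 U2 V2 : {set W},
              U = U1 :|: V1 -> U = U2 :|: V2 ->
              (U1, V1) \in G -> (U2, V2) \in G ->
              (U1 :&: U2, V1 :|: V2) \in G).

Definition gen_closed (W : finType) (S : brel W) : bool :=
  [&& S \subset RW W,
      [forall U : {set W}, (U != set0) ==> ((U, set0) \in S)],
      [forall U : {set W}, forall V : {set W}, forall U1 : {set W}, forall V1 : {set W},
         [&& (U, V) \in S, U \subset U1, V1 \subset V & [disjoint U1 & V1]]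
         ==> ((U1, V1) \in S)] &
      [forall U1 : {set W}, forall V1 : {set W}, forall U2 : {set W}, forall V2 : {set W},
         [&& U1 :|: V1 == U2 :|: V2, (U1, V1) \in S & (U2, V2) \in S]
         ==> ((U1 :&: U2, V1 :|: V2) \in S)]].

(* Gen(Omega): the smallest subset of R_W containing Omega, all (U,set0) with U
   nonempty, and closed under the two rules: the intersection of all such sets
   (R_W itself is one such set whenever Omega is a subset of R_W). *)
Definition Gen (W : finType) (Omega : brel W) : brel W :=
  \bigcap_(S : brel W | gen_closed S && (Omega \subset S)) S.

Definition is_backbone (W : finType) (G : brel W) (Delta : seq {set W}) : Prop :=
  (forall i, i < size Delta -> nth set0 Delta i != set0) /\
  (forall i j, i < size Delta -> j < size Delta -> i != j ->
      [disjoint nth set0 Delta i & nth set0 Delta j]) /\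
  \bigcup_(U <- Delta) U = [set: W] /\
  (forall i, i.+1 < size Delta -> (nth set0 Delta i, nth set0 Delta i.+1) \in G) /\
  (forall i, i < size Delta -> forall V1 V2 : {set W},
      V1 \subset nth set0 Delta i -> V2 \subset nth set0 Delta i ->
      V1 != set0 -> V2 != set0 -> [disjoint V1 & V2] ->
      (V1, V2) \notin G /\ (V2, V1) \notin G).

Definition BA (W : finType) (Delta : seq {set W}) (G : brel W) : Prop :=
  belief_algebra G /\ is_backbone G Delta.

(* Main.v *)
Require Import Defs.
From mathcomp Require Import all_boot.
From mathcomp Require Import zify.

Section Aux.
Variable W : finType.
Implicit Types A B : {set W}.

Lemma disjP A B : reflect (forall x, x \in A -> x \in B -> False) [disjoint A & B].
Proof.
rewrite -setI_eq0; apply: (iffP eqP) => [H x xA xB | H].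
  have xAB : x \in A :&: B by rewrite inE xA xB.
  by rewrite H inE in xAB.
apply/setP => x; rewrite !inE; apply/negbTE/negP => /andP[xA xB]; exact: H x xA xB.
Qed.

Lemma gen_closedP (S : brel W) : gen_closed S <->
  [/\ S \subset RW W,
      forall U : {set W}, U != set0 -> (U, set0) \in S,
      forall U V U1 V1 : {set W}, (U, V) \in S -> U \subset U1 -> V1 \subset V ->
         [disjoint U1 & V1] -> (U1, V1) \in S &
      forall U1 V1 U2 V2 : {set W}, U1 :|: V1 = U2 :|: V2 -> (U1, V1) \in S -> (U2, V2) \in S ->
         (U1 :&: U2, V1 :|: V2) \in S].
Proof.
split.
  case/and4P=> h0 /forallP h1 /forallP h2 /forallP h3; split => //.
  - by move=> U /(implyP (h1 U)).
  - move=> U V U1 V1 a b c d.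
    by have := h2 U => /forallP /(_ V) /forallP /(_ U1) /forallP /(_ V1) /implyP; apply; rewrite a b c d.
  - move=> U1 V1 U2 V2 a b c.
    by have := h3 U1 => /forallP /(_ V1) /forallP /(_ U2) /forallP /(_ V2) /implyP; apply; rewrite a b c eqxx.
case=> h0 h1 h2 h3; apply/and4P; split => //.
- by apply/forallP => U; apply/implyP; exact: h1.
- apply/forallP=> U; apply/forallP=> V; apply/forallP=> U1; apply/forallP=> V1.
  by apply/implyP => /and4P[a b c d]; exact: h2 a b c d.
- apply/forallP=> U1; apply/forallP=> V1; apply/forallP=> U2; apply/forallP=> V2.
  by apply/implyP => /and3P[/eqP a b c]; exact: h3 a b c.
Qed.

Lemma Gen_sub (Om S : brel W) : gen_closed S -> Om \subset S -> Gen Om \subset S.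
Proof. move=> h1 h2; apply: (bigcap_inf S); by rewrite h1 h2. Qed.

Lemma Gen_super (Om : brel W) : Om \subset Gen Om.
Proof.
apply/subsetP => p pO; apply/bigcapP => S /andP[_ /subsetP]; exact.
Qed.

Lemma Gen_ba (Om : brel W) (H : brel W) : gen_closed H -> Om \subset H ->
  (forall U V : {set W}, (U, V) \in H -> (V, U) \notin H) ->
  (forall U : {set W}, (U, set0) \in H -> U != set0) ->
  belief_algebra (Gen Om).
Proof.
move=> hH hO Has Hne.
have sGH := Gen_sub Om H hH hO.
have [h0 _ _ _] := (gen_closedP H).1 hH.
split; first exact: subset_trans sGH h0.
split.
  move=> U; split; first by move=> /(subsetP sGH); exact: Hne.
  move=> Un; apply/bigcapP => S /andP[/gen_closedP[_ h1 _ _] _]; exact: h1.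
split.
  move=> U V /(subsetP sGH) /Has; apply: contra => /(subsetP sGH) //.
split.
  move=> U V U1 V1 a b c d; apply/bigcapP => S SP; have := SP.
  case/andP => /gen_closedP[_ _ h2 _] _; apply: h2 _ a c d.
  by move/bigcapP: b; apply.
move=> U U1 V1 U2 V2 e1 e2 b c; apply/bigcapP => S SP; have := SP.
case/andP => /gen_closedP[_ _ _ h3] _; apply: h3.
- by rewrite -e1 -e2.
- by move/bigcapP: b; apply.
- by move/bigcapP: c; apply.
Qed.

End Aux.

Section Rank.
Variable W : finType.
Variable D : seq {set W}.
Hypothesis Ddisj : forall i j, i < size D -> j < size D -> i != j ->
      [disjoint nth set0 D i & nth set0 D j].
Hypothesis Dcov : \bigcup_(U <- D) U = [set: W].

Definition rank (w : W) := find (fun X : {set W} => w \in X) D.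

Lemma cov_has (w : W) : has (fun X : {set W} => w \in X) D.
Proof.
have : w \in \bigcup_(U <- D) U by rewrite Dcov inE.
elim: D => [|X s IH]; first by rewrite big_nil inE.
by rewrite big_cons inE /= => /orP[->|/IH ->] //; rewrite orbT.
Qed.

Lemma rank_lt w : rank w < size D.
Proof. by rewrite /rank -has_find cov_has. Qed.

Lemma rank_in w : w \in nth set0 D (rank w).
Proof. exact: (nth_find set0 (cov_has w)). Qed.

Lemma rank_eq w i : i < size D -> w \in nth set0 D i -> rank w = i.
Proof.
move=> ilt win; apply/eqP; apply/negPn/negP => ne.
by move/disjP: (Ddisj _ _ (rank_lt w) ilt ne) => /(_ w (rank_in w) win).
Qed.

Definition Bk k := [set w | rank w == k].
Definition Rk k := [set w | k <= rank w].

Lemma Bk_nth k : k < size D -> Bk k = nth set0 D k.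
Proof.
move=> klt; apply/setP => w; rewrite inE; apply/idP/idP.
  by move/eqP <-; exact: rank_in.
by move/(rank_eq _ _ klt) ->.
Qed.

Definition Hrel : brel W := [set p : {set W} * {set W} |
  [disjoint p.1 & p.2] && [exists u in p.1, [forall v in p.2, rank u < rank v]]].

Lemma inH (U V : {set W}) : ((U, V) \in Hrel) =
  [disjoint U & V] && [exists u in U, [forall v in V, rank u < rank v]].
Proof. by rewrite inE. Qed.

Lemma inHP (U V : {set W}) : reflect ([disjoint U & V] /\
   exists2 u, u \in U & forall v, v \in V -> rank u < rank v) ((U, V) \in Hrel).
Proof.
rewrite inH; apply: (iffP andP) => [[d /exists_inP[u uU /forall_inP h]]|[d [u uU h]]].
  by split => //; exists u.
by split => //; apply/exists_inP; exists u => //; apply/forall_inP.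
Qed.

Lemma H_closed : gen_closed Hrel.
Proof.
apply/gen_closedP; split.
- by apply/subsetP => -[U V] /inHP[d _]; rewrite inE.
- move=> U /set0Pn[u uU]; apply/inHP; split; first by apply/disjP => x _; rewrite inE.
  by exists u => // v; rewrite inE.
- move=> U V U1 V1 /inHP[_ [u uU h]] s1 s2 d; apply/inHP; split => //.
  by exists u; [exact: (subsetP s1) | move=> v /(subsetP s2); exact: h].
- move=> U1 V1 U2 V2 e /inHP[d1 [u1 u1U h1]] /inHP[d2 [u2 u2U h2]]; apply/inHP; split.
    apply/disjP => x; rewrite !inE => /andP[xU1 xU2] /orP[xV|xV].
      by move/disjP: d1 => /(_ x xU1 xV).
    by move/disjP: d2 => /(_ x xU2 xV).
  case: (leqP (rank u1) (rank u2)) => le.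
    have u1U2 : u1 \in U2.
      have : u1 \in U2 :|: V2 by rewrite -e inE u1U.
      rewrite inE => /orP[//|/h2]; rewrite ltnNge le //.
    exists u1; first by rewrite inE u1U u1U2.
    move=> v; rewrite inE => /orP[/h1 //|/h2]; exact: leq_ltn_trans le.
  have u2U1 : u2 \in U1.
    have : u2 \in U1 :|: V1 by rewrite e inE u2U.
    rewrite inE => /orP[//|/h1]; rewrite ltnNge (ltnW le) //.
  exists u2; first by rewrite inE u2U u2U1.
  move=> v; rewrite inE => /orP[/h1|/h2 //]; exact: ltn_trans le.
Qed.

Lemma H_asym (U V : {set W}) : (U, V) \in Hrel -> (V, U) \notin Hrel.
Proof.
move=> /inHP[_ [u uU h]]; apply/negP => /inHP[_ [v vV h']].
by have := ltn_trans (h v vV) (h' u uU); rewrite ltnn.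
Qed.

Lemma H_ne (U : {set W}) : (U, set0) \in Hrel -> U != set0.
Proof. by move=> /inHP[_ [u uU _]]; apply/set0Pn; exists u. Qed.

Lemma H_block i (V1 V2 : {set W}) : i < size D -> V1 \subset nth set0 D i ->
  V2 \subset nth set0 D i -> V2 != set0 -> (V1, V2) \notin Hrel.
Proof.
move=> ilt s1 s2 /set0Pn[v vV]; apply/negP => /inHP[_ [u uU h]].
have := h v vV.
by rewrite (rank_eq _ _ ilt (subsetP s1 _ uU)) (rank_eq _ _ ilt (subsetP s2 _ vV)) ltnn.
Qed.

Lemma BA_sub (G : brel W) : belief_algebra G ->
  (forall i, i < size D -> nth set0 D i != set0) ->
  (forall i, i.+1 < size D -> (nth set0 D i, nth set0 D i.+1) \in G) ->
  (forall i, i < size D -> forall V1 V2 : {set W},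
      V1 \subset nth set0 D i -> V2 \subset nth set0 D i ->
      V1 != set0 -> V2 != set0 -> [disjoint V1 & V2] ->
      (V1, V2) \notin G /\ (V2, V1) \notin G) ->
  G \subset Hrel.
Proof.
move=> [A0 [A1 [A2 [A3 A4]]]] Dne Hchain Hblk.
set n := size D.
have step : forall d k, k + d = n.-1 -> k < n -> (Bk k, Rk k.+1) \in G.
  elim=> [|d IH] k e kn.
    have -> : Rk k.+1 = set0.
      apply/setP => w; rewrite !inE; have := rank_lt w; rewrite -/n => h.
      apply/negbTE; rewrite -ltnNge; lia.
    by apply/A1; rewrite Bk_nth //; exact: Dne.
  have k1n : k.+1 < n by lia.
  have IHk := IH k.+1 ltac:(lia) k1n.
  have ch := Hchain k k1n; rewrite -(Bk_nth _ kn) -(Bk_nth _ k1n) in ch.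
  have a1 : (Bk k :|: Rk k.+2, Bk k.+1) \in G.
    apply: A3 (subsetUl _ _) ch (subxx _) _.
    apply/disjP => x; rewrite !inE => h1 h2; lia.
  have a2 : (Bk k :|: Bk k.+1, Rk k.+2) \in G.
    apply: A3 (subsetUr _ _) IHk (subxx _) _.
    apply/disjP => x; rewrite !inE => h1 h2; lia.
  have e1 : Rk k = (Bk k :|: Rk k.+2) :|: Bk k.+1.
    apply/setP => x; rewrite !inE; apply/idP/idP => h; lia.
  have e2 : Rk k = (Bk k :|: Bk k.+1) :|: Rk k.+2.
    apply/setP => x; rewrite !inE; apply/idP/idP => h; lia.
  have := A4 _ _ _ _ _ e1 e2 a1 a2.
  have -> : (Bk k :|: Rk k.+2) :&: (Bk k :|: Bk k.+1) = Bk k.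
    apply/setP => x; rewrite !inE; apply/idP/idP => h; lia.
  have -> : Bk k.+1 :|: Rk k.+2 = Rk k.+1.
    apply/setP => x; rewrite !inE; apply/idP/idP => h; lia.
  by [].
apply/subsetP => -[U V] UVG.
have d : [disjoint U & V] by have := subsetP A0 _ UVG; rewrite inE.
have [V0|/set0Pn[v0 v0V]] := eqVneq V set0.
  subst V; apply/inHP; split => //.
  have /set0Pn[u uU] := (A1 U).1 UVG.
  by exists u => // v; rewrite inE.
have [w wV wmin] := @arg_minnP _ v0 (fun x => x \in V) rank v0V.
set k := rank w in wmin *.
apply/inHP; split => //.
case: (pickP [pred u | (u \in U) && (rank u < k)]) => [u /andP[uU lt] | none].
  exists u => // v vV; exact: leq_trans lt (wmin v vV).
exfalso.
have kn : k < n := rank_lt w.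
have UR : U \subset Rk k.
  apply/subsetP => u uU; rewrite inE; have := none u; rewrite /= uU /= => /negbT.
  by rewrite -leqNgt.
have VR : V \subset Rk k by apply/subsetP => v vV; rewrite inE; exact: wmin.
set U' := Rk k :\: V.
have a1 : (U', V) \in G.
  apply: A3 _ UVG (subxx V) _.
    apply/subsetP => u uU; have := subsetP UR _ uU; rewrite !inE => ->; rewrite andbT.
    by apply/negP => uV; move/disjP: d => /(_ u uU uV).
  by apply/disjP => x; rewrite !inE => /andP[/negP h _].
have st := step (n.-1 - k) k ltac:(lia) kn.
have e1 : Rk k = U' :|: V.
  apply/setP => x; rewrite !inE; case xV: (x \in V) => /=; last by rewrite orbF.
  by have := subsetP VR x xV; rewrite inE.
have e2 : Rk k = Bk k :|: Rk k.+1.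
  apply/setP => x; rewrite !inE; apply/idP/idP => h; lia.
have a2 := A4 _ _ _ _ _ e1 e2 a1 st.
have a3 : (U' :&: Bk k, V :&: Bk k) \in G.
  apply: A3 (subxx _) a2 _ _.
    by apply/subsetP => x; rewrite !inE => /andP[-> _].
  by apply/disjP => x; rewrite !inE => /andP[/andP[/negP h _] _] /andP[].
have wB : w \in V :&: Bk k by rewrite !inE wV eqxx.
have ne2 : V :&: Bk k != set0 by apply/set0Pn; exists w.
have [E|ne] := eqVneq (U' :&: Bk k) set0.
  rewrite E in a3.
  have := A2 _ _ ((A1 (V :&: Bk k)).2 ne2).
  by rewrite a3.
have dj : [disjoint U' :&: Bk k & V :&: Bk k].
  by apply/disjP => x; rewrite !inE => /andP[/andP[/negP h _] _] /andP[].
have s1 : U' :&: Bk k \subset nth set0 D k by rewrite -Bk_nth // subsetIr.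
have s2 : V :&: Bk k \subset nth set0 D k by rewrite -Bk_nth // subsetIr.
have [] := Hblk k kn _ _ s1 s2 ne ne2 dj.
by rewrite a3.
Qed.

End Rank.

Lemma BA_inter (W : finType) (Delta : seq {set W}) (G1 G2 : brel W) :
  BA Delta G1 -> BA Delta G2 -> BA Delta (G1 :&: G2).
Proof.
move=> [[a0 [a1 [a2 [a3 a4]]]] [bd1 [bdisj1 [bcov1 [bch1 bblk1]]]]]
       [[c0 [c1 [c2 [c3 c4]]]] [_ [_ [_ [bch2 _]]]]].
split.
  split; first exact: subset_trans (subsetIl _ _) a0.
  split.
    move=> U; rewrite inE; split; first by case/andP => /a1.
    by move=> h; rewrite (a1 U).2 // (c1 U).2.
  split.
    by move=> U V; rewrite !inE => /andP[/a2 h _]; rewrite negb_and h.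
  split.
    move=> U V U1 V1 s; rewrite !inE => /andP[h1 h2] s' d.
    by rewrite (a3 _ _ _ _ s h1 s' d) (c3 _ _ _ _ s h2 s' d).
  move=> U U1 V1 U2 V2 e1 e2; rewrite !inE => /andP[h1 h2] /andP[h3 h4].
  by rewrite (a4 _ _ _ _ _ e1 e2 h1 h3) (c4 _ _ _ _ _ e1 e2 h2 h4).
split => //; split => //; split => //; split.
  by move=> i hi; rewrite inE bch1 // bch2.
move=> i hi V1 V2 s1 s2 n1 n2 d.
have [h1 h2] := bblk1 i hi V1 V2 s1 s2 n1 n2 d.
by rewrite !inE negb_and h1 negb_and h2.
Qed.

Theorem theorem2 (W : finType) (Delta : seq {set W}) (G1 G2 : brel W) :
  0 < #|W| ->
  BA Delta G1 -> BA Delta G2 ->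
  BA Delta (G1 :&: G2) /\
  (belief_algebra (Gen (G1 :|: G2)) /\ BA Delta (Gen (G1 :|: G2))).
Proof.
move=> _ hG1 hG2.
split; first exact: BA_inter.
have [BA1 [bd1 [bdisj1 [bcov1 [bch1 bblk1]]]]] := hG1.
have [BA2 [bd2 [bdisj2 [bcov2 [bch2 bblk2]]]]] := hG2.
have s1 := @BA_sub W Delta bdisj1 bcov1 G1 BA1 bd1 bch1 bblk1.
have s2 := @BA_sub W Delta bdisj2 bcov2 G2 BA2 bd2 bch2 bblk2.
have sU : G1 :|: G2 \subset Hrel W Delta by rewrite subUset s1 s2.
have hc := @H_closed W Delta.
have sG := Gen_sub W (G1 :|: G2) (Hrel W Delta) hc sU.
have bG : belief_algebra (Gen (G1 :|: G2)).
  apply: (Gen_ba W (G1 :|: G2) (Hrel W Delta) hc sU).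
    exact: H_asym.
  exact: H_ne.
split => //; split => //.
split => //; split => //; split => //; split.
  move=> i hi; apply: (subsetP (Gen_super W (G1 :|: G2))); by rewrite inE bch1.
move=> i hi V1 V2 t1 t2 n1 n2 d.
split; apply/negP => /(subsetP sG); apply/negP.
  exact: (@H_block W Delta bdisj1 bcov1 i).
exact: (@H_block W Delta bdisj1 bcov1 i).
Qed.
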